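(* For $q^ip^j\in\mathcal{C}(p,q)$ and $n\in\omega$ let $O_n(q^ip^j)=\{q^ip^j\}\cup\big(\downarrow_{\preceq}q^{i+n}p^{j+n}\setminus\{q^{i+n}p^{j+n}\}\big)$, and let $\tau_2$ be the topology on $\mathcal{C}(p,q)$ generated by the neighbourhood bases $\{O_n(q^ip^j):n\in\omega\}$ at each point. Then $(\mathcal{C}(p,q),\tau_2)$ is a $T_1$ locally compact topological inverse semigroup.
   Context: The bicyclic monoid $\mathcal{C}(p,q)$ is the monoid generated by $p,q$ subject only to $pq=1$; elements are uniquely $q^ip^j$, $i,j\in\omega$, with multiplication $q^kp^l\cdot q^mp^n = q^{k-l+m}p^n$ if $l<m$, $=q^kp^n$ if $l=m$, $=q^kp^{l-m+n}$ if $l>m$, and inversion $(q^ip^j)^{-1}=q^jp^i$. The natural partial order: $q^ip^j\preceq q^sp^t$ iff $i\ge s$ and $i-j=s-t$; $\downarrow_{\preceq}x=\{y:y\preceq x\}$, so $\downarrow_{\preceq}q^ap^b=\{q^{a+k}p^{b+k}:k\in\omega\}$. A topological inverse semigroup is an inverse semigroup with a topology making multiplication jointly continuous and inversion continuous; locally compact means every point has a compact neighbourhood. *)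

(* Defs.v *)
From HB Require Import structures.
From mathcomp Require Import all_boot all_order.
From mathcomp Require Import all_algebra zify.
From mathcomp Require Import all_classical all_reals all_analysis.
Set Implicit Arguments. Unset Strict Implicit. Unset Printing Implicit Defensive.
Local Open Scope classical_set_scope.

(* The bicyclic monoid C(p,q): the element q^i p^j is represented by (i, j). *)
Definition bicyclic : Type := (nat * nat)%type.
HB.instance Definition _ := Choice.on bicyclic.

Definition bq (i j : nat) : bicyclic := (i, j).

Definition bmul (x y : bicyclic) : bicyclic :=
  let: (k, l) := x in let: (m, n) := y in
  if l < m then (k + (m - l), n)%N
  else if l == m then (k, n)
  else (k, l - m + n)%N.

Definition binv (x : bicyclic) : bicyclic := (x.2, x.1).

(* natural partial order: q^i p^j <= q^s p^t iff i >= s and i - j = s - t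
   (the integer equation i - j = s - t is written i + t = s + j in nat) *)
Definition ble (x y : bicyclic) : Prop :=
  (y.1 <= x.1)%N /\ (x.1 + y.2 = y.1 + x.2)%N.

Definition bdown (x : bicyclic) : set bicyclic := [set y | ble y x].

Definition O_nbhd (n : nat) (x : bicyclic) : set bicyclic :=
  [set x] `|` (bdown (x.1 + n, x.2 + n)%N `\` [set (x.1 + n, x.2 + n)%N]).

Definition tau2_open (A : set bicyclic) : Prop :=
  forall x, A x -> exists n, O_nbhd n x `<=` A.

Lemma tau2_openT : tau2_open setT.
Proof. by move=> x _; exists 0%N. Qed.

Lemma O_nbhd_mono (k n : nat) (x : bicyclic) : (k <= n)%N ->
  O_nbhd n x `<=` O_nbhd k x.
Proof.
case: x => a b /= hk z [->|[[/= hz1 hz2] hzne]]; first by left.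
right; split.
  split => /=; last by lia.
  by lia.
move=> /= heq; apply: hzne; case: z heq hz1 hz2 => c d /= [-> ->] hz1 hz2.
suff -> : n = k by [].
by lia.
Qed.

Lemma tau2_openI : setI_closed tau2_open.
Proof.
move=> A B oA oB x [Ax Bx].
have [n hn] := oA x Ax; have [m hm] := oB x Bx.
exists (maxn n m) => y hy; split.
  by apply: hn; apply: (O_nbhd_mono (leq_maxl n m)).
by apply: hm; apply: (O_nbhd_mono (leq_maxr n m)).
Qed.

Lemma tau2_open_bigU (I : Type) (f : I -> set bicyclic) :
  (forall i, tau2_open (f i)) -> tau2_open (\bigcup_i f i).
Proof.
move=> h x [i _ fxi]; have [n hn] := h i x fxi.
by exists n => y /hn fy; exists i.
Qed.

HB.instance Definition _ :=
  isOpenTopological.Build bicyclic tau2_openT tau2_openI tau2_open_bigU.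

Definition inverse_semigroup (S : Type) (mul : S -> S -> S) (inv : S -> S) :=
  associative mul /\
  forall x : S, [/\ mul (mul x (inv x)) x = x,
                    mul (mul (inv x) x) (inv x) = inv x &
                    forall y, mul (mul x y) x = x -> mul (mul y x) y = y -> y = inv x].

Definition topological_inverse_semigroup (S : topologicalType)
    (mul : S -> S -> S) (inv : S -> S) :=
  [/\ inverse_semigroup mul inv,
      continuous (fun xy : S * S => mul xy.1 xy.2) &
      continuous inv].

Definition locally_compact_space (S : topologicalType) :=
  forall x : S, exists K : set S, nbhs x K /\ compact K.

(* Main.v *)
Require Import Defs.
From HB Require Import structures.
From mathcomp Require Import all_boot all_order all_algebra zify.
From mathcomp Require Import all_classical all_reals all_analysis.
Local Open Scope classical_set_scope.

Lemma bmulE (x y : bicyclic) : bmul x y = (x.1 + (y.1 - x.2), (x.2 - y.1) + y.2)%N.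
Proof.
case: x y => k l [m n] /=; rewrite /bmul.
case: ifP => h; first by congr pair; lia.
case: eqP => h2; first by subst; congr pair; lia.
by congr pair; lia.
Qed.

Lemma O_open n x : open (O_nbhd n x).
Proof.
suff : tau2_open (O_nbhd n x) by []. move=> z [->|hz]; first by exists n.
exists 0%N => w [->|hw]; first by right.
case: x z hz w hw => a b [c d] [[/= h1 h2] h3] [e f] [[/= h4 h5] h6] /=.
right; split; first by split => /=; lia.
case=> h7 h8; subst; apply: h6; congr pair; lia.
Qed.

Lemma nbhsP (x : bicyclic) (B : set bicyclic) :
  nbhs x B <-> exists n, O_nbhd n x `<=` B.
Proof.
rewrite nbhsE /=; split.
  move=> [C [oC Cx] CB]; have [n hn] := oC x Cx.
  by exists n => z /hn /CB.
move=> [n hn]; exists (O_nbhd n x) => //; split; first exact: O_open.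
by left.
Qed.

Lemma OmemP n (x z : bicyclic) : O_nbhd n x z <->
  (z.1 = x.1 /\ z.2 = x.2) \/ ((x.1 + n < z.1)%N /\ (z.1 + x.2 = x.1 + z.2)%N).
Proof.
case: x z => a b [c d] /=; split.
  case=> [[-> ->]|[[/= h1 h2] h3]]; first by left.
  right; split; last by lia.
  rewrite ltn_neqAle h1 andbT; apply/negP => /eqP e; apply: h3; congr pair => //; lia.
case=> [[-> ->]|[h1 h2]]; first by left.
right; split; first by split => /=; lia.
case=> h3 h4; lia.
Qed.

Lemma mul_ok n (x y z w : bicyclic) :
  let K := (n + x.1 + x.2 + y.1 + y.2)%N in
  O_nbhd K x z -> O_nbhd K y w -> O_nbhd n (bmul x y) (bmul z w).
Proof.
rewrite /= => /OmemP hz /OmemP hw; apply/OmemP; rewrite !bmulE /=.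
case: x y z w hz hw => a b [c d] [e f] [g h] /= hz hw.
lia.
Qed.

Lemma bmul_assoc : associative bmul.
Proof. move=> [a b] [c d] [e f]; rewrite !bmulE /=; congr pair; lia. Qed.

Lemma inv_sg : inverse_semigroup bmul binv.
Proof.
split; first exact: bmul_assoc.
move=> [a b]; rewrite /binv; split; try by rewrite !bmulE /=; congr pair; lia.
move=> [c d] h h'; move: h h'; rewrite !bmulE /= => -[h1 h2] [h3 h4]; congr pair; lia.
Qed.

Lemma mul_cont : continuous (fun xy : bicyclic * bicyclic => bmul xy.1 xy.2).
Proof.
move=> [x y] C /nbhsP [n hn].
exists (O_nbhd (n + x.1 + x.2 + y.1 + y.2) x, O_nbhd (n + x.1 + x.2 + y.1 + y.2) y).
  by split => /=; apply/nbhsP; exists (n + x.1 + x.2 + y.1 + y.2)%N; apply: subset_refl.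
move=> [z w] [/= hz hw]; apply: hn; exact: mul_ok.
Qed.

Lemma inv_cont : continuous binv.
Proof.
move=> x C /nbhsP [n hn]; apply/nbhsP; exists n => z hz; apply: hn.
move/OmemP: hz; rewrite OmemP; case: x z => a b [c d] /=; lia.
Qed.

Lemma t1 : @accessible_space bicyclic.
Proof.
move=> x y /eqP hxy; exists (O_nbhd y.1 x); split; first exact: O_open.
  by rewrite in_setE; left.
rewrite in_setE => /OmemP; case: x y hxy => a b [c d] /= hxy.
case=> [[e1 e2]|]; first by apply: hxy; rewrite e1 e2.
lia.
Qed.

Lemma O_compact x : compact (O_nbhd 0 x).
Proof.
move=> F FF FK.
pose z m := (x.1 + m, x.2 + m)%N.
have [[m hm]|hno] := pselect (exists m, forall B, F B -> B (z m)).
  exists (z m); split; first exact: hm.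
  move=> B C FB /nbhs_singleton Cz; exists (z m); split => //; exact: hm.
have hfin : forall N, exists D, F D /\ forall m, (m <= N)%N -> ~ D (z m).
  have hB : forall m, exists B, F B /\ ~ B (z m).
    move=> m; apply: contrapT => hne; apply: hno; exists m => B FB.
    apply: contrapT => nB; apply: hne; by exists B.
  elim=> [|N [D [FD hD]]].
    have [B [FB nB]] := hB 0%N; exists B; split => // m; rewrite leqn0 => /eqP ->.
    exact: nB.
  have [B [FB nB]] := hB N.+1; exists (D `&` B); split; first exact: filterI.
  move=> m; rewrite leq_eqVlt => /orP [/eqP -> [_ //]|hm [Dm _]].
  exact: (hD m hm).
exists x; split; first by left.
move=> B C FB /nbhsP [n hn].
have [D [FD hD]] := hfin n.
have : F (O_nbhd 0 x `&` B `&` D) by apply: filterI => //; apply: filterI.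
move=> /filter_ex [s [[Ks Bs] Ds]].
exists s; split => //; apply: hn.
move/OmemP: Ks => Ks; apply/OmemP.
case: Ks => [[e1 e2]|[h1 h2]]; first by left.
have [hle|hlt] := leqP (s.1 - x.1) n.
  exfalso; apply: (hD _ hle).
  have -> : z (s.1 - x.1) = s.
    rewrite /z; move: h1 h2; clear; case: s => c d /= h1 h2; congr pair; lia.
  exact: Ds.
move: hlt h1 h2; clear; case: s => c d /= h1 h2 h3.
right; lia.
Qed.

Lemma loc_compact : locally_compact_space bicyclic.
Proof.
move=> x; exists (O_nbhd 0 x); split; last exact: O_compact.
by apply/nbhsP; exists 0%N.
Qed.

Theorem proposition2 :
  @accessible_space bicyclic /\
  locally_compact_space bicyclic /\
  topological_inverse_semigroup bmul binv.
Proof.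
split; first exact: t1.
split; first exact: loc_compact.
split; [exact: inv_sg | exact: mul_cont | exact: inv_cont].
Qed.
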